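(* Let $T:\mathbb{Z}_{\ge 0}\to\mathbb{R}$ be a sequence of real numbers. Then $T$ satisfies $$T(mn) = T(m)T(n) + T(m-1)T(n-1) \quad\text{for all integers } m,n\ge 1$$ if and only if $T$ is one of the following five sequences: (1) $T(n)=0$ for all $n\ge 0$; (2) $T(n)=\tfrac12$ for all $n\ge 0$; (3) $T(0)=0$ and $T(2n)=T(2n-1)=n$ for all $n\ge 1$; (4) $T(3n)=T(3n+2)=0$ and $T(3n+1)=1$ for all $n\ge 0$; (5) $T(n)=\tfrac12 n(n+1)$ for all $n\ge 0$. *)

(* Defs.v *)
From Stdlib Require Export Reals.
Open Scope R_scope.

Definition satisfies_eq (T : nat -> R) : Prop :=
  forall m n : nat, (1 <= m)%nat -> (1 <= n)%nat ->
    T (m * n)%nat = T m * T n + T (m - 1)%nat * T (n - 1)%nat.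

(* Main.v *)
Require Import Defs.
From Stdlib Require Import Reals.
From Stdlib Require Import Lra Lia.
Open Scope R_scope.

Lemma R1 (T : nat -> R) : satisfies_eq T -> T 1%nat = 1 ->
  forall n, (1 <= n)%nat -> T (2*n)%nat = T 2%nat * T n + T (n-1)%nat.
Proof.
  intros H H1 n Hn. rewrite (H 2%nat n) by lia.
  replace (2-1)%nat with 1%nat by reflexivity. rewrite H1. ring.
Qed.

Lemma R2 (T : nat -> R) : satisfies_eq T -> T 0%nat = 0 -> T 1%nat = 1 ->
  forall n, (1 <= n)%nat -> T (2*n-1)%nat = T n + (T 3%nat - T 2%nat) * T (n-1)%nat.
Proof.
  intros H H0 H1 n Hn.
  pose proof (H 4%nat n ltac:(lia) Hn) as E1.
  pose proof (H 2%nat (2*n)%nat ltac:(lia) ltac:(lia)) as E2.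
  pose proof (H 2%nat 2%nat ltac:(lia) ltac:(lia)) as E3.
  pose proof (R1 T H H1 n Hn) as E4.
  replace (2*(2*n))%nat with (4*n)%nat in E2 by lia.
  replace (4-1)%nat with 3%nat in E1 by reflexivity.
  replace (2-1)%nat with 1%nat in E2 by reflexivity.
  simpl in E3. rewrite H1 in E2, E3. rewrite E4 in E2. rewrite E3 in E1.
  lra.
Qed.

Lemma uniq (T f : nat -> R) : satisfies_eq T -> satisfies_eq f ->
  T 0%nat = 0 -> T 1%nat = 1 -> f 0%nat = 0 -> f 1%nat = 1 ->
  T 2%nat = f 2%nat -> T 3%nat = f 3%nat -> forall n, T n = f n.
Proof.
  intros HT Hf T0 T1 f0 f1 E2 E3.
  assert (K : forall N n, (n <= N)%nat -> T n = f n).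
  { induction N as [|N IH]; intros n Hn.
    - replace n with 0%nat by lia. congruence.
    - destruct (Nat.le_gt_cases n N) as [h|h]; [now apply IH|].
      assert (n = S N) by lia. subst n.
      destruct N as [|N]; [congruence|].
      destruct (Nat.Even_or_Odd (S (S N))) as [[k Hk]|[k Hk]].
      + rewrite Hk. rewrite (R1 T HT T1 k ltac:(lia)), (R1 f Hf f1 k ltac:(lia)).
        rewrite E2, (IH k ltac:(lia)), (IH (k-1)%nat ltac:(lia)). reflexivity.
      + replace (S (S N)) with (2*(k+1)-1)%nat by lia.
        rewrite (R2 T HT T0 T1 (k+1) ltac:(lia)), (R2 f Hf f0 f1 (k+1) ltac:(lia)).
        rewrite E2, E3, (IH (k+1)%nat ltac:(lia)), (IH (k+1-1)%nat ltac:(lia)). reflexivity. }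
  intro n. apply (K n n). lia.
Qed.

Definition f3 (n : nat) : R := INR (Nat.div2 (S n)).
Definition f4 (n : nat) : R := if Nat.eqb (n mod 3) 1 then 1 else 0.
Definition f5 (n : nat) : R := 1 / 2 * INR n * (INR n + 1).

Lemma f3_even k : f3 (2*k)%nat = INR k.
Proof. unfold f3. rewrite Nat.div2_succ_double. reflexivity. Qed.
Lemma f3_odd k : f3 (2*k+1)%nat = INR k + 1.
Proof. unfold f3. replace (S (2*k+1)) with (2*(k+1))%nat by lia.
  rewrite Nat.div2_double, plus_INR. simpl. ring. Qed.

Lemma sat_f3 : satisfies_eq f3.
Proof.
  intros m n Hm Hn.
  destruct (Nat.Even_or_Odd m) as [[a Ha]|[a Ha]];
  destruct (Nat.Even_or_Odd n) as [[b Hb]|[b Hb]]; subst m n.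
  - replace (2*a*(2*b))%nat with (2*(2*a*b))%nat by ring.
    replace (2*a-1)%nat with (2*(a-1)+1)%nat by lia.
    replace (2*b-1)%nat with (2*(b-1)+1)%nat by lia.
    rewrite !f3_even, !f3_odd, !mult_INR, !minus_INR by lia.
    repeat first [rewrite mult_INR | rewrite plus_INR]; simpl; ring.
  - replace (2*a*(2*b+1))%nat with (2*(a*(2*b+1)))%nat by ring.
    replace (2*a-1)%nat with (2*(a-1)+1)%nat by lia.
    replace (2*b+1-1)%nat with (2*b)%nat by lia.
    rewrite !f3_even, !f3_odd, !mult_INR, !minus_INR, !plus_INR by lia.
    repeat first [rewrite mult_INR | rewrite plus_INR]; simpl; ring.
  - replace ((2*a+1)*(2*b))%nat with (2*((2*a+1)*b))%nat by ring.
    replace (2*b-1)%nat with (2*(b-1)+1)%nat by lia.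
    replace (2*a+1-1)%nat with (2*a)%nat by lia.
    rewrite !f3_even, !f3_odd, !mult_INR, !minus_INR, !plus_INR by lia.
    repeat first [rewrite mult_INR | rewrite plus_INR]; simpl; ring.
  - replace ((2*a+1)*(2*b+1))%nat with (2*(2*a*b+a+b)+1)%nat by ring.
    replace (2*b+1-1)%nat with (2*b)%nat by lia.
    replace (2*a+1-1)%nat with (2*a)%nat by lia.
    rewrite !f3_even, !f3_odd.
    repeat first [rewrite mult_INR | rewrite plus_INR]; simpl; ring.
Qed.

Lemma mod3_lin k x : ((3*k + x) mod 3 = x mod 3)%nat.
Proof. rewrite Nat.add_comm, Nat.mul_comm. apply Nat.Div0.mod_add. Qed.

Lemma sat_f4 : satisfies_eq f4.
Proof.
  intros m n Hm Hn.
  pose proof (Nat.div_mod_eq m 3) as Dm. pose proof (Nat.div_mod_eq n 3) as Dn.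
  pose proof (Nat.mod_upper_bound m 3 ltac:(lia)) as Bm.
  pose proof (Nat.mod_upper_bound n 3 ltac:(lia)) as Bn.
  set (a := (m / 3)%nat) in *. set (r := (m mod 3)%nat) in *.
  set (b := (n / 3)%nat) in *. set (q := (n mod 3)%nat) in *.
  clearbody a r b q. subst m n.
  unfold f4.
  replace ((3*a+r)*(3*b+q))%nat with (3*(3*a*b+a*q+r*b) + r*q)%nat by ring.
  rewrite !mod3_lin.
  destruct r as [|[|[|r]]]; try lia; destruct q as [|[|[|q]]]; try lia;
  try (replace (3*a+0-1)%nat with (3*(a-1)+2)%nat by lia);
  try (replace (3*b+0-1)%nat with (3*(b-1)+2)%nat by lia);
  try (replace (3*a+1-1)%nat with (3*a+0)%nat by lia);
  try (replace (3*b+1-1)%nat with (3*b+0)%nat by lia);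
  try (replace (3*a+2-1)%nat with (3*a+1)%nat by lia);
  try (replace (3*b+2-1)%nat with (3*b+1)%nat by lia);
  rewrite !mod3_lin; simpl; ring.
Qed.

Lemma sat_f5 : satisfies_eq f5.
Proof.
  intros m n Hm Hn. unfold f5.
  rewrite mult_INR, !minus_INR by lia.
    repeat first [rewrite mult_INR | rewrite plus_INR]; simpl. field.
Qed.

Lemma alg (t u : R) :
  2*t^2+2*t*u+u^2 - t - 2*u - u*t - u*t^2 = 0 ->
  t^2 + 2*t*u + u^2 - t - 2*u - u^3 = 0 ->
  2*t^2*u + t*u^2 + t^2 - u*t^3 - 2*t - u = 0 ->
  (t = 0 /\ u = 0) \/ (t = 1 /\ u = 1) \/ (t = 3 /\ u = 3).
Proof.
  intros HA HB HE.
  assert (HAB : (t - u) * (t - u*t - u^2) = 0) by lra.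
  apply Rmult_integral in HAB. destruct HAB as [H1|H1].
  - assert (t = u) by lra. subst u.
    assert (X : t * ((t - 1) * (t - 3)) = 0) by lra.
    apply Rmult_integral in X. destruct X as [X|X]; [left; lra|].
    apply Rmult_integral in X. destruct X as [X|X]; right; [left|right]; lra.
  - assert (Hu1 : u <> 1) by (intro; subst; lra).
    destruct (Req_dec u 0) as [Hu0|Hu0].
    { left. subst. lra. }
    exfalso.
    assert (Ht : t = u^2/(1-u)).
    { field_simplify_eq; [lra|]. intro; apply Hu1; lra. }
    assert (Hq : u * (u^4 - 2*u^3 + 2*u^2 - 4*u + 2) = 0).
    { replace (u * (u^4 - 2*u^3 + 2*u^2 - 4*u + 2)) with
        (- (1-u)^2 * (t^2 + 2*t*u + u^2 - t - 2*u - u^3)).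
      - rewrite HB. ring.
      - rewrite Ht. field. intro; apply Hu1; lra. }
    assert (Hr : u * (-1 + u + u^2 + u^3 - u^4 - u^5 - u^6) = 0).
    { replace (u * (-1 + u + u^2 + u^3 - u^4 - u^5 - u^6)) with
        ((1-u)^3 * (2*t^2*u + t*u^2 + t^2 - u*t^3 - 2*t - u)).
      - rewrite HE. ring.
      - rewrite Ht. field. intro; apply Hu1; lra. }
    apply Rmult_integral in Hq. destruct Hq as [Hq|Hq]; [contradiction|].
    apply Rmult_integral in Hr. destruct Hr as [Hr|Hr]; [contradiction|].
    assert (K : (-268 - 148*u + 32*u^2 + 337*u^3 + 276*u^4 + 174*u^5) *
                (u^4 - 2*u^3 + 2*u^2 - 4*u + 2) +
                (-571 + 205*u - 246*u^2 + 174*u^3) *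
                (-1 + u + u^2 + u^3 - u^4 - u^5 - u^6) = 35) by ring.
    rewrite Hq, Hr in K. lra.
Qed.

Lemma polys (T : nat -> R) : satisfies_eq T -> T 0%nat = 0 -> T 1%nat = 1 ->
  let t := T 2%nat in let u := T 3%nat - T 2%nat in
  2*t^2+2*t*u+u^2 - t - 2*u - u*t - u*t^2 = 0 /\
  t^2 + 2*t*u + u^2 - t - 2*u - u^3 = 0 /\
  2*t^2*u + t*u^2 + t^2 - u*t^3 - 2*t - u = 0.
Proof.
  intros H H0 H1.
  pose proof (H 2%nat 2%nat ltac:(lia) ltac:(lia)) as V4. simpl in V4.
  pose proof (R2 T H H0 H1 3 ltac:(lia)) as V5. simpl in V5.
  pose proof (R1 T H H1 3 ltac:(lia)) as V6. simpl in V6.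
  pose proof (R2 T H H0 H1 4 ltac:(lia)) as V7. simpl in V7.
  pose proof (R1 T H H1 4 ltac:(lia)) as V8. simpl in V8.
  pose proof (R2 T H H0 H1 5 ltac:(lia)) as V9. simpl in V9.
  pose proof (H 3%nat 3%nat ltac:(lia) ltac:(lia)) as H33. simpl in H33.
  pose proof (H 3%nat 5%nat ltac:(lia) ltac:(lia)) as H35. simpl in H35.
  pose proof (R2 T H H0 H1 8 ltac:(lia)) as V15. simpl in V15.
  pose proof (H 3%nat 6%nat ltac:(lia) ltac:(lia)) as H36. simpl in H36.
  pose proof (R1 T H H1 9 ltac:(lia)) as V18. simpl in V18.
  rewrite H1 in V4.
  rewrite V4 in V7, V8, V9, H35. rewrite V5 in V9, H35, H36. rewrite V9 in H33, V18.
  rewrite V7, V8 in V15. rewrite V8 in V18. rewrite V6 in H36.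
  rewrite H35 in V15. rewrite H36 in V18.
  intros t u. unfold t, u.
  split; [|split]; nra.
Qed.

Lemma mod3_val k r : (r < 3)%nat -> f4 (3*k + r)%nat = if Nat.eqb r 1 then 1 else 0.
Proof. intro Hr. unfold f4. rewrite mod3_lin, Nat.mod_small by lia. reflexivity. Qed.

Theorem theorem1 (T : nat -> R) :
  satisfies_eq T <->
  ((forall n : nat, T n = 0) \/
   (forall n : nat, T n = 1 / 2) \/
   (T 0%nat = 0 /\ forall n : nat, (1 <= n)%nat ->
      T (2 * n)%nat = INR n /\ T (2 * n - 1)%nat = INR n) \/
   (forall n : nat, T (3 * n)%nat = 0 /\ T (3 * n + 2)%nat = 0 /\ T (3 * n + 1)%nat = 1) \/
   (forall n : nat, T n = 1 / 2 * INR n * (INR n + 1))).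
Proof.
  split.
  - intro H.
    pose proof (H 1%nat 1%nat ltac:(lia) ltac:(lia)) as H11. simpl in H11.
    assert (Hrec : forall n, T (S n) * (1 - T 1%nat) = T 0%nat * T n).
    { intro n. pose proof (H 1%nat (S n) ltac:(lia) ltac:(lia)) as X.
      rewrite Nat.mul_1_l in X. simpl in X. rewrite Nat.sub_0_r in X. lra. }
    destruct (Req_dec (T 1%nat) 1) as [Hb|Hb].
    + assert (H0 : T 0%nat = 0) by nra.
      destruct (polys T H H0 Hb) as [PA [PB PE]].
      destruct (alg _ _ PA PB PE) as [[Ht Hu]|[[Ht Hu]|[Ht Hu]]].
      *
        assert (E : forall n, T n = f4 n).
        { apply uniq; auto; try apply sat_f4; unfold f4; simpl; lra. }
        right; right; right; left. intro n.
        rewrite !E. pose proof (mod3_val n 0 ltac:(lia)) as A0.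
        rewrite Nat.add_0_r in A0. rewrite A0, !mod3_val by lia. simpl. lra.
      *
        assert (E : forall n, T n = f3 n).
        { apply uniq; auto; try apply sat_f3; unfold f3; simpl; lra. }
        right; right; left. split; [exact H0|].
        intros n Hn. rewrite !E. rewrite f3_even.
        replace (2*n-1)%nat with (2*(n-1)+1)%nat by lia.
        rewrite f3_odd, minus_INR by lia. simpl. split; ring.
      *
        assert (E : forall n, T n = f5 n).
        { apply uniq; auto; try apply sat_f5; unfold f5; simpl; lra. }
        right; right; right; right. exact E.
    + destruct (Req_dec (T 0%nat) 0) as [Ha|Ha].
      * left. intro n. destruct n as [|n]; [exact Ha|].
        pose proof (Hrec n) as X. rewrite Ha, Rmult_0_l in X.
        apply Rmult_integral in X. destruct X as [X|X]; [exact X|].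
        exfalso; apply Hb; lra.
      * set (c := T 0%nat / (1 - T 1%nat)).
        assert (Hb' : 1 - T 1%nat <> 0) by (intro; apply Hb; lra).
        assert (Hc : forall n, T n = T 0%nat * c ^ n).
        { induction n as [|n IH]; [simpl; ring|].
          assert (H2 : T (S n) = T 0%nat * T n / (1 - T 1%nat)).
          { rewrite <- Hrec. field. exact Hb'. }
          rewrite H2, IH. unfold c. simpl. field. exact Hb'. }
        pose proof (H 2%nat 2%nat ltac:(lia) ltac:(lia)) as H22. simpl in H22.
        rewrite (Hc 1%nat) in H11. rewrite (Hc 1%nat), (Hc 2%nat), (Hc 4%nat) in H22.
        set (a := T 0%nat) in *.
        assert (E1 : c = a * c^2 + a).
        { apply (Rmult_eq_reg_l a); [|exact Ha]. simpl in H11.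
          replace (a*(a*c^2+a)) with (a * (c * 1) * (a * (c * 1)) + a * a) by ring.
          rewrite <- H11. ring. }
        assert (E2 : c^4 = a * c^4 + a * c^2).
        { apply (Rmult_eq_reg_l a); [|exact Ha]. rewrite H22 at 1. ring. }
        assert (Hc0 : c <> 0) by (intro Z; rewrite Z in E1; apply Ha; simpl in E1; lra).
        assert (E3 : c^3 * (c - 1) = 0).
        { assert (X : c^4 = c^2 * (a*c^2+a)) by (rewrite E2 at 1; ring).
          rewrite <- E1 in X.
          replace (c^3*(c-1)) with (c^4 - c^2*c) by ring. rewrite X. ring. }
        apply Rmult_integral in E3. destruct E3 as [E3|E3].
        { exfalso. apply (pow_nonzero c 3 Hc0). exact E3. }
        assert (H2 : c = 1) by lra.
        right; left. intro n. rewrite Hc. fold a. rewrite H2, pow1.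
        rewrite H2 in E1. simpl in E1. lra.
  - intros [Hz|[Hh|[[H0 H3]|[H4|H5]]]].
    + intros m n _ _. rewrite !Hz. ring.
    + intros m n _ _. rewrite !Hh. field.
    + assert (E : forall n, T n = f3 n).
      { intro n. destruct (Nat.Even_or_Odd n) as [[k Hk]|[k Hk]]; subst n.
        - destruct k as [|k]; [simpl; rewrite H0; unfold f3; simpl; reflexivity|].
          rewrite f3_even. exact (proj1 (H3 (S k) ltac:(lia))).
        - rewrite f3_odd. replace (2*k+1)%nat with (2*(S k)-1)%nat by lia.
          rewrite (proj2 (H3 (S k) ltac:(lia))). rewrite S_INR. reflexivity. }
      intros m n Hm Hn. rewrite !E. apply sat_f3; assumption.
    + assert (E : forall n, T n = f4 n).
      { intro n. pose proof (Nat.div_mod_eq n 3) as Dn.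
        pose proof (Nat.mod_upper_bound n 3 ltac:(lia)) as Bn.
        rewrite Dn. rewrite mod3_val by lia.
        destruct (n mod 3) as [|[|[|r]]]; try lia; simpl.
        - rewrite Nat.add_0_r. apply (H4 (n/3)%nat).
        - apply (H4 (n/3)%nat).
        - apply (H4 (n/3)%nat). }
      intros m n Hm Hn. rewrite !E. apply sat_f4; assumption.
    + intros m n Hm Hn. rewrite !H5. exact (sat_f5 m n Hm Hn).
Qed.
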